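(* Let $A,\beta,\xi_0,\theta>0$ and $0<\alpha<\frac12$. Let $v_{n,m}\colon(0,\xi_0]\to[0,\infty)$, for integers $n,m\ge0$, and let $w\colon(0,\xi_0]\to[0,\infty)$ be bounded. Suppose that for all $n,m,k\ge0$ and $\xi\in(0,\xi_0]$: (1) $v_{n+1,m}(\xi)\le v_{n,m}(\xi)$; (2) $v_{n+k,m}(\xi)\le4(1-A\xi^2)^kv_{n,m}(\xi)$; (3) $v_{0,m}(\xi)\le\theta^{-m}w(\xi)$. Then for any $c>0$ the sequence $t_n=\sup\{v_{n,m}(\xi):\ n^{-\alpha}<\xi\le\xi_0,\ m\in\mathbb Z_{\ge0},\ m<c\log n\}$ decays rapidly in $n$.
   Context: A sequence $\{t_n\}$ decays rapidly in $n$ if for each $\ell\ge1$ there is $C$ with $|t_n|\le Cn^{-\ell}$ for all $n\ge1$ (a supremum over the empty set is taken to be $0$). *)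

(* Defs.v *)
From Stdlib Require Import Reals.
From Coquelicot Require Import Coquelicot.
Open Scope R_scope.

(* Supremum of a set of reals, with the convention sup of the empty set = 0.
   (Lub_Rbar of the empty set is -oo; the max with 0 implements the convention.
   In our application all elements are >= 0, so for nonempty sets this is the
   usual supremum, possibly +oo.) *)
Definition sup0 (S : R -> Prop) : Rbar :=
  match Lub_Rbar S with
  | Finite x => Finite (Rmax 0 x)
  | p_infty => p_infty
  | m_infty => Finite 0
  end.

Definition decays_rapidly (t : nat -> Rbar) : Prop :=
  forall l : nat, (1 <= l)%nat ->
    exists C : R, forall n : nat, (1 <= n)%nat ->
      Rbar_le (Rbar_abs (t n)) (Finite (C * / (INR n ^ l))).

Definition t_seq (v : nat -> nat -> R -> R) (alpha xi0 c : R) (n : nat) : Rbar :=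
  sup0 (fun y => exists (m : nat) (xi : R),
          Rpower (INR n) (- alpha) < xi /\ xi <= xi0 /\
          INR m < c * ln (INR n) /\ y = v n m xi).

(* Main.v *)
Require Import Defs.
From Stdlib Require Import Reals Lra Lia Psatz.
From Coquelicot Require Import Coquelicot.
Open Scope R_scope.

Lemma exple x y : x <= y -> exp x <= exp y.
Proof. intros H; destruct (Rle_lt_or_eq_dec _ _ H) as [h|h]; [left; now apply exp_increasing | subst; lra]. Qed.

Lemma exppow a n : exp a ^ n = exp (INR n * a).
Proof. rewrite <- Rpower_pow by apply exp_pos. unfold Rpower. now rewrite ln_exp. Qed.

Lemma sup0_bound (S : R -> Prop) (M : R) :
  0 <= M -> (forall y, S y -> y <= M) -> Rbar_le (Rbar_abs (sup0 S)) (Finite M).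
Proof.
  intros HM HS. unfold sup0.
  destruct (Lub_Rbar_correct S) as [_ Hl].
  assert (Hb : Rbar_le (Lub_Rbar S) (Finite M)).
  { apply Hl. intros x Hx. simpl. now apply HS. }
  destruct (Lub_Rbar S) as [x| |]; simpl in *.
  - rewrite Rabs_right; unfold Rmax; destruct Rle_dec; lra.
  - contradiction.
  - rewrite Rabs_R0; lra.
Qed.

Lemma quad_bound P A u : 0 < A -> 0 <= u -> P * u - A * exp u <= P * P / A.
Proof.
  intros HA Hu.
  assert (H1 : 1 + u/2 <= exp (u/2)) by apply exp_ineq1_le.
  assert (H2 : exp u = exp (u/2) * exp (u/2)) by (rewrite <- exp_plus; f_equal; lra).
  assert (H3 : u * u / 4 <= exp u) by (rewrite H2; nra).
  assert (H4 : P * u - A * (u*u/4) <= P * P / A).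
  { assert (E: P * P / A - (P * u - A * (u*u/4)) = (P - A*u/2)*(P - A*u/2)/A) by (field; apply Rgt_not_eq; exact HA).
    assert (0 <= (P - A*u/2)*(P - A*u/2)/A).
    { apply Rmult_le_pos; [pose proof (Rle_0_sqr (P - A*u/2)) as Hs; unfold Rsqr in Hs; lra| left; now apply Rinv_0_lt_compat]. }
    lra. }
  nra.
Qed.

Theorem proposition7p6
  (A beta xi0 theta alpha : R)
  (v : nat -> nat -> R -> R) (w : R -> R)
  (hA : 0 < A) (hbeta : 0 < beta) (hxi0 : 0 < xi0) (htheta : 0 < theta)
  (halpha0 : 0 < alpha) (halpha1 : alpha < 1 / 2)
  (hv_nonneg : forall n m xi, 0 < xi <= xi0 -> 0 <= v n m xi)
  (hw_nonneg : forall xi, 0 < xi <= xi0 -> 0 <= w xi)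
  (hw_bdd : exists B : R, forall xi, 0 < xi <= xi0 -> w xi <= B)
  (h1 : forall n m xi, 0 < xi <= xi0 -> v (S n) m xi <= v n m xi)
  (h2 : forall n m k xi, 0 < xi <= xi0 ->
          v (n + k)%nat m xi <= 4 * (1 - A * xi ^ 2) ^ k * v n m xi)
  (h3 : forall m xi, 0 < xi <= xi0 -> v O m xi <= / theta ^ m * w xi) :
  forall c : R, 0 < c -> decays_rapidly (t_seq v alpha xi0 c).
Proof.
  intros c hc l hl.
  destruct hw_bdd as [B0 HB0].
  set (B := Rmax B0 0).
  assert (HB : forall xi, 0 < xi <= xi0 -> w xi <= B).
  { intros xi hx. unfold B. eapply Rle_trans; [apply HB0; auto| apply Rmax_l]. }
  assert (HBp : 0 <= B) by apply Rmax_r.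
  set (K := c * Rabs (ln theta)).
  assert (HK : 0 <= K) by (unfold K; apply Rmult_le_pos; [lra|apply Rabs_pos]).
  set (g := 1 - 2 * alpha).
  assert (Hg : 0 < g) by (unfold g; lra).
  set (P := (K + INR l) / g).
  exists (4 * B * exp (P * P / A)).
  intros n hn.
  assert (Hn : 1 <= INR n) by (apply (le_INR 1); lia).
  set (L := ln (INR n)).
  assert (HL : 0 <= L) by (unfold L; rewrite <- ln_1; apply ln_le; lra).
  assert (HnL : INR n = exp L) by (unfold L; rewrite exp_ln; lra).
  assert (Hnl : / INR n ^ l = exp (- (INR l * L))).
  { rewrite HnL, exppow, exp_Ropp. reflexivity. }
  rewrite Hnl.
  set (M := 4 * B * exp (K * L - A * exp (g * L))).
  assert (HMC : M <= 4 * B * exp (P * P / A) * exp (- (INR l * L))).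
  { unfold M. rewrite (Rmult_assoc (4 * B) (exp _) (exp _)), <- exp_plus.
    apply Rmult_le_compat_l; [lra|]. apply exple.
    pose proof (quad_bound P A (g * L) hA ltac:(nra)).
    assert (P * (g * L) = K * L + INR l * L) by (unfold P; field; lra).
    lra. }
  assert (HM0 : 0 <= M) by (unfold M; pose proof (exp_pos (K * L - A * exp (g * L))); nra).
  apply Rbar_le_trans with (Finite M); [| exact HMC].
  apply sup0_bound; [exact HM0|].
  intros y [m [xi [Hxi1 [Hxi2 [Hm Hy]]]]]. subst y.
  unfold Rpower in Hxi1. fold L in Hxi1. fold L in Hm.
  pose proof (exp_pos (- alpha * L)) as He.
  assert (Hx : 0 < xi <= xi0) by lra.
  set (q := 1 - A * xi ^ 2).
  destruct (Rle_or_lt q 0) as [Hq|Hq].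
  - (* v n = 0 *)
    assert (Hmono : forall k, v (1 + k)%nat m xi <= v 1%nat m xi).
    { induction k. - replace (1+0)%nat with 1%nat by lia; lra.
      - replace (1 + S k)%nat with (S (1 + k)) by lia. eapply Rle_trans; [apply h1; auto| auto]. }
    assert (H01 := h2 0%nat m 1%nat xi Hx). simpl in H01. fold q in H01.
    pose proof (hv_nonneg 0%nat m xi Hx).
    replace n with (1 + (n - 1))%nat by lia.
    eapply Rle_trans; [apply Hmono|]. assert (Hq' : (1 - A*(xi*(xi*1)))*1 = q) by (unfold q; simpl; ring). rewrite Hq' in H01.
    assert (0 <= -q * v 0%nat m xi) by (apply Rmult_le_pos; lra). lra.
  - assert (Hv := h2 0%nat m n xi Hx). change (0 + n)%nat with n in Hv. fold q in Hv.
    pose proof (hv_nonneg 0%nat m xi Hx) as Hv0.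
    assert (Hw := h3 m xi Hx).
    assert (Hth : / theta ^ m <= exp (K * L)).
    { rewrite <- Rpower_pow by lra. unfold Rpower. rewrite <- exp_Ropp. apply exple.
      pose proof (pos_INR m).
      assert (INR m * Rabs (ln theta) <= c * L * Rabs (ln theta)) by (apply Rmult_le_compat_r; [apply Rabs_pos| lra]).
      pose proof (Rle_abs (- ln theta)). rewrite Rabs_Ropp in H1.
      unfold K. nra. }
    assert (Hv0B : v 0%nat m xi <= exp (K * L) * B).
    { eapply Rle_trans; [exact Hw|]. pose proof (hw_nonneg xi Hx).
      assert (0 <= / theta ^ m) by (left; apply Rinv_0_lt_compat, pow_lt; lra).
      pose proof (HB xi Hx). nra. }
    assert (Hqn : q ^ n <= exp (- A * exp (g * L))).
    { assert (Hq1 : q <= exp (- A * xi^2)) by (unfold q; pose proof (exp_ineq1_le (- A * xi ^ 2)); lra).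
      eapply Rle_trans. apply pow_incr. split; [lra|]. exact Hq1.
      rewrite exppow. apply exple.
      assert (exp (g * L) <= xi ^ 2 * INR n).
      { rewrite HnL. replace (g * L) with ((-alpha*L) + (-alpha * L) + L) by (unfold g; ring).
        rewrite !exp_plus. apply Rmult_le_compat_r; [left; apply exp_pos|]. nra. }
      nra. }
    pose proof (pow_lt q n Hq).
    unfold M. replace (K * L - A * exp (g * L)) with (K * L + (- A * exp (g * L))) by ring.
    rewrite exp_plus.
    pose proof (exp_pos (K * L)). pose proof (exp_pos (- A * exp (g * L))).
    eapply Rle_trans; [exact Hv|].
    apply Rle_trans with (4 * exp (- A * exp (g * L)) * (exp (K * L) * B)).
    + apply Rmult_le_compat; nra.
    + nra.
Qed.
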